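(* Let $K$ be a finite field of characteristic $p$ and let $d$ be an integer with $\gcd(d,|K|-1)=1$ that is nondegenerate over $K$. Then there exist $a,b\in K^\times$ with $W_{K,d}(a)>0$ and $W_{K,d}(b)<0$.
   Context: $\psi_K(x)=\exp(2\pi i\,\mathrm{Tr}_{K/\mathbb{F}_p}(x)/p)$ is the canonical additive character of $K$, and for $a\in K$ the Weil sum is $W_{K,d}(a)=\sum_{x\in K}\psi_K(x^d+ax)$; these values are real numbers. $d$ is degenerate over $K$ if $d\equiv p^j\pmod{|K|-1}$ for some integer $j$, and nondegenerate otherwise. *)

(* Defs.v *)
From HB Require Import structures.
From mathcomp Require Import all_boot all_order all_algebra all_field.
From mathcomp Require Import reals trigo.
From mathcomp Require Import complex.
Set Implicit Arguments. Unset Strict Implicit. Unset Printing Implicit Defensive.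
Import Order.TTheory GRing.Theory Num.Theory.
Local Open Scope ring_scope.

Section WeilSum.
Variables (R : realType) (K : finFieldType) (p : nat).

(* |K| = p ^ fdeg, when p is the characteristic of K *)
Definition fdeg : nat := logn p #|K|.

Definition abs_trace (x : K) : K := \sum_(i < fdeg) x ^+ (p ^ i).

(* Tr_{K/F_p}(x) lies in the prime field F_p = {k%:R | k < p};
   trace_nat x is the representative k in {0,..,p-1} *)
Definition trace_nat (x : K) : nat :=
  odflt 0%N (omap val [pick k : 'I_p | (k%:R : K) == abs_trace x]).

Definition psiK (x : K) : R[i] :=
  let t : R := (2 * pi * (trace_nat x)%:R) / p%:R in
  (cos t +i* sin t)%C.

Definition weil_sum (d : nat) (a : K) : R[i] :=
  \sum_(x : K) psiK (x ^+ d + a * x).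

End WeilSum.

Definition degenerate (K : finFieldType) (p d : nat) : Prop :=
  exists j : nat, d = p ^ j %[mod #|K| - 1].

(* Main.v *)
Require Import Defs.
From HB Require Import structures.
From mathcomp Require Import all_boot all_order all_algebra all_field.
From mathcomp Require Import all_fingroup all_solvable.
From mathcomp Require Import reals trigo.
From mathcomp Require Import complex.
From mathcomp Require Import zify ring lra.
Set Implicit Arguments. Unset Strict Implicit. Unset Printing Implicit Defensive.
Import Order.TTheory GRing.Theory Num.Theory.
Local Open Scope ring_scope.
Section Field.
Variables (K : finFieldType) (p : nat).
Hypothesis hp : p \in [pchar K].

Local Notation q := #|K|.
Local Notation n := (fdeg K p).

Lemma p_prime : prime p. Proof. exact: pcharf_prime hp. Qed.
Lemma p_gt1 : (1 < p)%N. Proof. exact: prime_gt1 p_prime. Qed.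

Lemma q_gt1 : (1 < q)%N. Proof. exact: finNzRing_gt1. Qed.

Lemma q_pow : q = (p ^ n)%N.
Proof.
have := card_pgroup (abelem_pgroup (fin_ring_pchar_abelem hp)).
by rewrite cardsT.
Qed.

Lemma n_gt0 : (0 < n)%N.
Proof.
case: (posnP n) => // h; have := q_gt1; by rewrite q_pow h.
Qed.

Lemma qR0 : (q%:R : K) = 0.
Proof. by rewrite q_pow natrX (pcharf0 hp) expr0n eqn0Ngt n_gt0. Qed.

Lemma frobD i (x y : K) : (x + y) ^+ (p ^ i) = x ^+ (p ^ i) + y ^+ (p ^ i).
Proof.
apply: exprDn_pchar; rewrite pnatX pnatE ?hp //; exact: p_prime.
Qed.

Lemma frob_sum i (I : finType) (F : I -> K) :
  (\sum_(j : I) F j) ^+ (p ^ i) = \sum_j F j ^+ (p ^ i).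
Proof.
apply: (big_morph (fun x => x ^+ (p ^ i))) => [x y|]; first exact: frobD.
by rewrite expr0n expn_eq0 eqn0Ngt (prime_gt0 p_prime).
Qed.

Lemma exp_q (x : K) : x ^+ (p ^ n) = x.
Proof. by rewrite -q_pow expf_card. Qed.

Lemma trD (x y : K) : abs_trace p (x + y) = abs_trace p x + abs_trace p y.
Proof. by rewrite /abs_trace -big_split /=; apply: eq_bigr => i _; rewrite frobD. Qed.

Lemma tr_frob (x : K) : abs_trace p x ^+ p = abs_trace p x.
Proof.
rewrite /abs_trace -[X in _ ^+ X = _](expn1 p) frob_sum.
move: (exp_q x); have := n_gt0; case: (fdeg K p) => // m _ hx.
rewrite big_ord_recr big_ord_recl /= -!exprM -!expnD addn1 hx expn0 expr1.
rewrite addrC; congr (_ + _).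
by apply: eq_bigr => i _; rewrite -exprM -expnD addn1.
Qed.

Lemma natK_inj k l : (k < p)%N -> (l < p)%N -> (k%:R : K) = l%:R -> k = l.
Proof.
wlog kl : k l / (k <= l)%N.
  move=> W hk hl e; case/orP: (leq_total k l) => h; first exact: W.
  by symmetry; apply: W.
move=> hk hl e; apply/eqP; rewrite eqn_leq kl /=.
have : (p %| l - k)%N by rewrite (dvdn_pcharf hp) natrB // e subrr.
case: (posnP (l - k)) => [h|h]; first by move: h; lia.
by move/dvdn_leq => /(_ h); lia.
Qed.

Lemma natK_mod m : ((m %% p)%N%:R : K) = m%:R.
Proof.
by rewrite {2}(divn_eq m p) natrD natrM (pcharf0 hp) mulr0 add0r.
Qed.

Lemma roots_bound (r : nat) (s : seq K) : (0 < r)%N -> uniq s ->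
  (forall z, z \in s -> z ^+ r = 1) -> (size s <= r)%N.
Proof.
move=> r0 us hs.
have nz : ('X^r - 1 : {poly K}) != 0.
  by rewrite -size_poly_gt0 size_Xn_sub_1.
have := @max_poly_roots _ _ s nz.
rewrite size_Xn_sub_1 // ltnS; apply => //.
by apply/allP => z /hs hz; rewrite rootE !hornerE hz subrr.
Qed.

Lemma prime_field (y : K) : y ^+ p = y -> exists2 k, (k < p)%N & k%:R = y.
Proof.
move=> hy.
have p1 := p_gt1.
have [->|y0] := eqVneq y 0; first by exists 0%N => //; lia.
case: (pickP (fun k : 'I_p => (k%:R : K) == y)) => [k /eqP ek | hn].
  by exists k.
exfalso.
have yp1 : y ^+ p.-1 = 1.
  by apply: (mulIf y0); rewrite -exprSr prednK ?mul1r // ltnW.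
have fr k : (k%:R : K) ^+ p = k%:R.
  by rewrite -(pFrobenius_autE hp) rmorph_nat.
pose s := y :: [seq (k%:R : K) | k <- iota 1 p.-1].
have : (size s <= p.-1)%N.
  apply: roots_bound; first lia.
  - rewrite /s cons_uniq; apply/andP; split.
      apply/mapP => [[k]]; rewrite mem_iota => hk ek.
      have hk' : (k < p)%N by lia.
      by move: (hn (Ordinal hk')); rewrite /= ek eqxx.
    rewrite map_inj_in_uniq ?iota_uniq // => a b; rewrite !mem_iota => ha hb.
    by apply: natK_inj; lia.
  - move=> z; rewrite inE => /orP [/eqP -> //|/mapP [k]].
    rewrite mem_iota => hk ->.
    have k0 : (k%:R : K) != 0.
      by rewrite -(dvdn_pcharf hp); apply/negP => /dvdn_leq; lia.
    by apply: (mulIf k0); rewrite -exprSr prednK ?mul1r ?fr // ltnW.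
by rewrite /= size_map size_iota; lia.
Qed.

Lemma trace_natP (x : K) :
  (trace_nat p x < p)%N /\ (trace_nat p x)%:R = abs_trace p x.
Proof.
rewrite /trace_nat; case: pickP => [k /eqP ek|hn] /=; first by split.
have [k hk ek] := prime_field (tr_frob x).
by move: (hn (Ordinal hk)); rewrite /= ek eqxx.
Qed.

Lemma trace_natD (x y : K) :
  trace_nat p (x + y) = ((trace_nat p x + trace_nat p y) %% p)%N.
Proof.
have [h1 e1] := trace_natP (x + y); have [h2 e2] := trace_natP x;
have [h3 e3] := trace_natP y.
apply: natK_inj => //; first by rewrite ltn_mod prime_gt0 // p_prime.
by rewrite natK_mod natrD e1 e2 e3 trD.
Qed.

Lemma trace_nat0 : trace_nat p (0 : K) = 0%N.
Proof.
have [h e] := trace_natP 0; apply: natK_inj => //; first exact: prime_gt0 p_prime.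
by rewrite e /abs_trace big1 // => i _; rewrite expr0n expn_eq0 eqn0Ngt (prime_gt0 p_prime).
Qed.

End Field.
Section Field2.
Variables (K : finFieldType) (p : nat).
Hypothesis hp : p \in [pchar K].

Local Notation q := #|K|.
Local Notation n := (fdeg K p).
Local Notation N := (#|K|.-1).

Lemma exp_unit (x : K) : x != 0 -> x ^+ N = 1.
Proof.
move=> x0; apply: (mulIf x0); rewrite -exprSr prednK ?mul1r ?expf_card //.
exact: ltnW (q_gt1 K).
Qed.

Lemma exp_period (x : K) k : x ^+ (k * N + 1) = x.
Proof.
elim: k => [|k IH]; first by rewrite mul0n add0n expr1.
rewrite mulSn -addnA addnC exprD IH -exprS prednK ?expf_card //.
exact: ltnW (q_gt1 K).
Qed.

Lemma NR : (N%:R : K) = -1.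
Proof.
have := qR0 hp; rewrite -(prednK (ltnW (q_gt1 K))) -natr1 => /eqP.
by rewrite addr_eq0 => /eqP.
Qed.

Lemma pow_sum m : (0 < m)%N ->
  \sum_(x : K) x ^+ m = if (N %| m)%N then -1 else 0.
Proof.
move=> m0; have q1 := q_gt1 K.
case: ifP => hd.
  rewrite (bigD1 0) //= expr0n eqn0Ngt m0 add0r.
  rewrite (eq_bigr (fun _ => 1)); last first.
    by move=> x hx; rewrite -(divnK hd) mulnC exprM exp_unit // expr1n.
  by rewrite sumr_const cardC1 NR.
have [y y0 hy] : exists2 y : K, y != 0 & y ^+ m != 1.
  case: (pickP (fun y : K => (y != 0) && (y ^+ m != 1))) => [y /andP[]|none].
    by exists y.
  exfalso.
  have hr : (0 < m %% N)%N by move: hd; rewrite /dvdn lt0n => ->.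
  suff : (N <= m %% N)%N by rewrite leqNgt ltn_mod; lia.
  rewrite -[X in (X <= _)%N](cardC1 (0 : K)) cardE.
  apply: roots_bound => //; first exact: enum_uniq.
  move=> z; rewrite mem_enum /= => z0.
  move: (none z); rewrite (z0 : z != 0) /= => /negbFE /eqP.
  by rewrite {1}(divn_eq m N) exprD mulnC exprM exp_unit // expr1n mul1r.
set S := \sum_x x ^+ m.
have e : S = y ^+ m * S.
  rewrite {1}/S (reindex_inj (mulfI y0)) /= mulr_sumr.
  by apply: eq_bigr => x _; rewrite exprMn.
have [//|S0] := eqVneq S 0.
by move: e; rewrite -{1}[S]mul1r => /(mulIf S0) /esym /eqP; rewrite (negbTE hy).
Qed.

Lemma trace_lin (b : K) :
  \sum_(x : K) abs_trace p (b * x) * x ^+ N.-1 = - b.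
Proof.
have q1 := q_gt1 K.
rewrite /abs_trace.
under eq_bigr do rewrite mulr_suml.
rewrite exchange_big /=.
rewrite (eq_bigr (fun i : 'I_n => b ^+ (p ^ i) * \sum_(x : K) x ^+ (p ^ i + N.-1)));
  last first.
  move=> i _; rewrite mulr_sumr; apply: eq_bigr => x _.
  by rewrite exprMn exprD mulrA.
have p1 := p_gt1 hp.
move: (q_pow hp); have := n_gt0 hp; case: (fdeg K p) => // k _ hq.
rewrite big_ord_recl /= expn0 expr1 pow_sum ?addnS //.
rewrite (_ : (1 + N.-1)%N = N); last by lia.
rewrite dvdnn mulrN1 big1 ?addr0 // => i _.
rewrite pow_sum; last by rewrite addn_gt0 expn_gt0 (ltnW p1).
have hP1 : (1 < p ^ bump 0 i)%N by rewrite /bump /= add1n -{1}(expn0 p) ltn_exp2l.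
have hP2 : (p ^ bump 0 i < q)%N.
  by rewrite hq ltn_exp2l // /bump /= add1n ltnS ltn_ord.
move: hP1 hP2; set P := (p ^ bump 0 i)%N => hP1 hP2.
rewrite (_ : (P + N.-1)%N = (P - 1 + N)%N); last by lia.
rewrite dvdn_addl ?dvdnn //.
case: ifP => hdv; last by rewrite mulr0.
have := @dvdn_leq N (P - 1) ltac:(lia) hdv; lia.
Qed.

Lemma trace_pow d : (0 < d)%N ->
  \sum_(x : K) abs_trace p (x ^+ d) * x ^+ N.-1 =
  - (\sum_(i < n) (N %| d * p ^ i + N.-1)%N)%:R.
Proof.
move=> d0; have p1 := p_gt1 hp.
rewrite /abs_trace.
under eq_bigr do rewrite mulr_suml.
rewrite exchange_big /= natr_sum -sumrN; apply: eq_bigr => i _.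
rewrite (eq_bigr (fun x : K => x ^+ (d * p ^ i + N.-1))); last first.
  by move=> x _; rewrite exprD exprM.
rewrite pow_sum; last by rewrite addn_gt0 muln_gt0 d0 expn_gt0 (ltnW p1).
by case: (N %| d * p ^ i + N.-1)%N; rewrite /= ?oppr0.
Qed.

Lemma trace_vanish_degenerate d (b : K) : (0 < d)%N -> b != 0 ->
  (forall x, abs_trace p (x ^+ d + b * x) = 0) -> degenerate K p d.
Proof.
move=> d0 b0 h.
have q1 := q_gt1 K; have p1 := p_gt1 hp.
have e : - (\sum_(i < n) (N %| d * p ^ i + N.-1)%N)%:R - b = 0 :> K.
  rewrite -trace_pow // -trace_lin -big_split /= big1 // => x _.
  by rewrite -mulrDl -(trD hp) h mul0r.
case: (pickP (fun i : 'I_n => (N %| d * p ^ i + N.-1)%N)) => [i ci | none]; last first.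
  move: e; rewrite big1 => [|i _]; last by rewrite none.
  by rewrite mulr0n oppr0 sub0r => /eqP; rewrite oppr_eq0 (negbTE b0).
exists (n - i)%N.
rewrite subn1.
have hdp : (1 <= d * p ^ i)%N by rewrite muln_gt0 d0 expn_gt0 (ltnW p1).
have e1 : ((d * p ^ i) %% N = 1 %% N)%N.
  apply/eqP; rewrite eqn_mod_dvd //.
  by move: ci; rewrite (_ : (d * p ^ i + N.-1)%N = (d * p ^ i - 1 + N)%N) ?dvdn_addl //; lia.
have e2 : ((p ^ n) %% N = 1 %% N)%N.
  by rewrite -(q_pow hp) -{1}(prednK (ltnW q1)) -addn1 modnDl.
rewrite -[in LHS](muln1 d) -modnMmr -e2 modnMmr.
rewrite (_ : (p ^ n = p ^ i * p ^ (n - i))%N); last first.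
  by rewrite -expnD subnKC // ltnW.
by rewrite mulnA -modnMml e1 modnMml mul1n.
Qed.

Lemma trace_nonzero : exists x : K, abs_trace p x != 0.
Proof.
case: (pickP (fun x : K => abs_trace p x != 0)) => [x hx | none]; first by exists x.
have := trace_lin 1; rewrite big1 => [/eqP|x _].
  by rewrite eq_sym oppr_eq0 oner_eq0.
by move: (none x) => /negbFE /eqP; rewrite mul1r => ->; rewrite mul0r.
Qed.

End Field2.
Section Char.
Variables (R : realType) (K : finFieldType) (p : nat).
Hypothesis hp : p \in [pchar K].

Definition ang (k : nat) : R := (2 * pi * k%:R) / p%:R.
Definition ee (k : nat) : R[i] := (cos (ang k) +i* sin (ang k))%C.

Lemma psiE (x : K) : psiK R p x = ee (trace_nat p x).
Proof. by []. Qed.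

Lemma pR0 : (p%:R : R) != 0.
Proof. by rewrite pnatr_eq0 -lt0n prime_gt0 // (p_prime hp). Qed.

Lemma angD k l : ang (k + l) = ang k + ang l.
Proof. by rewrite /ang natrD mulrDr mulrDl. Qed.

Lemma eeD k l : ee (k + l) = ee k * ee l.
Proof.
rewrite /ee angD cosD sinD.
set a := ang k; set b := ang l.
transitivity ((cos a * cos b - sin a * sin b) +i* (cos a * sin b + sin a * cos b))%C;
  last reflexivity.
by congr (_ +i* _)%C; rewrite addrC.
Qed.

Lemma ee_p : ee p = 1.
Proof.
rewrite /ee /ang mulfK ?pR0 // mulr_natl cos2pi sin2pi.
reflexivity.
Qed.

Lemma ee0 : ee 0 = 1.
Proof. rewrite /ee /ang mulr0 mul0r cos0 sin0; reflexivity. Qed.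

Lemma ee_mulp a : ee (a * p) = 1.
Proof. elim: a => [|a IH]; first by rewrite mul0n ee0. by rewrite mulSn eeD ee_p IH mulr1. Qed.

Lemma ee_mod k : ee (k %% p) = ee k.
Proof. by rewrite {2}(divn_eq k p) eeD ee_mulp mul1r. Qed.

Lemma psiD (x y : K) : psiK R p (x + y) = psiK R p x * psiK R p y.
Proof. by rewrite !psiE (trace_natD hp) ee_mod eeD. Qed.

Lemma psi0 : psiK R p (0 : K) = 1.
Proof. by rewrite psiE (trace_nat0 hp) ee0. Qed.

Lemma Re_psi (x : K) : complex.Re (psiK R p x) = cos (ang (trace_nat p x)).
Proof. by []. Qed.

Lemma cos_ang1 k : (k < p)%N -> cos (ang k) = 1 -> k = 0%N.
Proof.
move=> kp hc; apply/eqP; rewrite eqn0Ngt; apply/negP => k0.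
have p0 : (0 : R) < p%:R by rewrite ltr0n prime_gt0 // (p_prime hp).
set h := pi * (k%:R / p%:R) : R.
have e : ang k = h *+ 2 by rewrite /ang /h -mulr_natr; ring.
have h0 : 0 < h by rewrite /h mulr_gt0 ?pi_gt0 // divr_gt0 // ltr0n.
have h1 : h < pi.
  rewrite /h -{2}(mulr1 pi) ltr_pM2l ?pi_gt0 // ltr_pdivrMr // mul1r ltr_nat //.
have : 0 < sin h by apply: sin_gt0_pi; rewrite h0 h1.
move: hc; rewrite e cos_mulr2n => hc.
have hc2 : cos h ^+ 2 = 1 by move: hc; rewrite mulr2n; lra.
have hs : sin h ^+ 2 = 0 by rewrite sin2cos2 hc2 subrr.
by move/eqP: hs; rewrite expf_eq0 /= => /eqP ->; rewrite ltxx.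
Qed.

Lemma psi_eq1 (x : K) : psiK R p x = 1 -> abs_trace p x = 0.
Proof.
move=> h; have := Re_psi x; rewrite h => /esym hc.
have [tp te] := trace_natP hp x.
by rewrite -te (cos_ang1 tp hc).
Qed.

Lemma psi_sum0 : \sum_(y : K) psiK R p y = 0.
Proof.
have [x0 hx0] := trace_nonzero hp.
set S := \sum_(y : K) psiK R p y.
have e : S = S * psiK R p x0.
  rewrite {1}/S (reindex_inj (addIr x0)) /= mulr_suml.
  by apply: eq_bigr => y _; rewrite psiD.
have [//|S0] := eqVneq S 0.
move: e; rewrite -{1}[S]mulr1 => /(mulfI S0) /esym /psi_eq1 h.
by rewrite h eqxx in hx0.
Qed.

Lemma orth (x : K) :
  \sum_(a : K) psiK R p (a * x) = if x == 0 then #|K|%:R else 0.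
Proof.
case: eqVneq => [->|x0].
  by under eq_bigr do rewrite mulr0 psi0; rewrite sumr_const.
by have := psi_sum0; rewrite (reindex_inj (mulIf x0)).
Qed.

Lemma ReD (z w : R[i]) : complex.Re (z + w) = complex.Re z + complex.Re w.
Proof. by case: z; case: w. Qed.
Lemma ImD (z w : R[i]) : complex.Im (z + w) = complex.Im z + complex.Im w.
Proof. by case: z; case: w. Qed.

Lemma Re_sum (I : finType) (F : I -> R[i]) :
  complex.Re (\sum_i F i) = \sum_i complex.Re (F i).
Proof. exact: (big_morph _ ReD). Qed.
Lemma Im_sum (I : finType) (F : I -> R[i]) :
  complex.Im (\sum_i F i) = \sum_i complex.Im (F i).
Proof. exact: (big_morph _ ImD). Qed.

Lemma Im_psiN (y : K) : complex.Im (psiK R p (- y)) = - complex.Im (psiK R p y).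
Proof.
set t := ang (trace_nat p y).
have hz : psiK R p y = (cos t +i* sin t)%C by [].
have e1 : psiK R p y * (cos t +i* (- sin t))%C = 1.
  rewrite hz.
  transitivity ((cos t * cos t - sin t * (- sin t)) +i* (cos t * (- sin t) + sin t * cos t))%C;
    first reflexivity.
  transitivity ((1 : R) +i* 0)%C; last reflexivity.
  congr (_ +i* _)%C; last by ring.
  by rewrite -(cos2Dsin2 t); ring.
have e2 : psiK R p (- y) * psiK R p y = 1 by rewrite -psiD addNr psi0.
have : psiK R p (- y) = (cos t +i* (- sin t))%C.
  by rewrite -[LHS]mulr1 -e1 mulrA e2 mul1r.
by move=> ->.
Qed.

End Char.
Section Weil.
Variables (R : realType) (K : finFieldType) (p d : nat).
Hypothesis hp : p \in [pchar K].
Hypothesis hcop : coprime d (#|K| - 1).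
Hypothesis d0 : (0 < d)%N.

Local Notation W := (weil_sum R p d).
Local Notation psi := (psiK R p).

Lemma negd (x : K) : (- x) ^+ d = - (x ^+ d).
Proof.
case: (even_prime (p_prime hp)) => [p2|po].
  have h2 : (2 \in [pchar K])%N by move: hp; rewrite p2.
  by rewrite !(oppr_pchar2 h2).
have qo : odd #|K| by rewrite (q_pow hp) oddX po orbT.
have q1 := q_gt1 K.
have dodd : odd d.
  apply/negP => /negP de.
  have : (2 %| gcdn d (#|K| - 1))%N.
    rewrite dvdn_gcd; apply/andP; split; first by rewrite dvdn2.
    by rewrite dvdn2 oddB ?qo //; lia.
  by move: hcop; rewrite /coprime => /eqP ->.
by rewrite exprNn -signr_odd dodd expr1 mulN1r.
Qed.

Lemma pow_inj : injective (fun x : K => x ^+ d).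
Proof.
have q1 := q_gt1 K.
case: (egcdnP (#|K| - 1) d0) => km kn e _.
apply: (can_inj (g := fun y : K => y ^+ km)) => x /=.
move: hcop; rewrite /coprime => /eqP g1; rewrite g1 in e.
rewrite -exprM mulnC e subn1 addn1.
by rewrite -[X in _ ^+ X.+1]addn0 -addnS exp_period.
Qed.

Lemma W0 : W (0 : K) = 0.
Proof.
rewrite /weil_sum; under eq_bigr do rewrite mul0r addr0.
by have := @psi_sum0 R K p hp; rewrite (reindex_inj pow_inj).
Qed.

Lemma W_Im (a : K) : complex.Im (W a) = 0.
Proof.
rewrite /weil_sum Im_sum.
set I := \sum__ _.
have e : I = - I.
  rewrite {1}/I (reindex_inj oppr_inj) /= -sumrN; apply: eq_bigr => x _.
  by rewrite negd mulrN -opprD; exact: (Im_psiN R hp).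
by move: e; lra.
Qed.

Lemma W_C (a : K) : W a = (complex.Re (W a))%:C%C.
Proof. by move: (W_Im a); case: (W a) => x y /= ->. Qed.

Lemma sumW : \sum_(a : K) W a = #|K|%:R.
Proof.
rewrite /weil_sum exchange_big /=.
rewrite (eq_bigr (fun x : K => psi (x ^+ d) * (if x == 0 then #|K|%:R else 0))); last first.
  by move=> x _; rewrite -(orth R hp) mulr_sumr; apply: eq_bigr => a _; rewrite (psiD R hp).
rewrite (bigD1 0) //= eqxx expr0n eqn0Ngt d0 /= (psi0 R hp) mul1r big1 ?addr0 //.
by move=> x /negbTE ->; rewrite mulr0.
Qed.

Lemma sumW2 : \sum_(a : K) W a ^+ 2 = #|K|%:R ^+ 2.
Proof.
have e a : W a ^+ 2 = \sum_(x : K) \sum_(y : K) psi (x ^+ d + y ^+ d) * psi (a * (x + y)).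
  rewrite expr2 /weil_sum mulr_suml; apply: eq_bigr => x _.
  rewrite mulr_sumr; apply: eq_bigr => y _; rewrite -!(psiD R hp); congr psi; ring.
rewrite (eq_bigr _ (fun a _ => e a)) exchange_big /=.
rewrite (eq_bigr (fun x : K => psi (x ^+ d + (- x) ^+ d) * #|K|%:R)); last first.
  move=> x _; rewrite exchange_big /=.
  under eq_bigr do rewrite -mulr_sumr (orth R hp).
  rewrite (bigD1 (- x)) //= addrN eqxx big1 ?addr0 // => y hy.
  by rewrite [x + y]addrC addr_eq0 (negbTE hy) mulr0.
under eq_bigr do rewrite negd subrr (psi0 R hp) mul1r.
rewrite sumr_const expr2 mulr_natr; congr (_ *+ _); exact: eq_card.
Qed.

Lemma Re_le (a : K) : complex.Re (W a) <= #|K|%:R.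
Proof.
rewrite /weil_sum Re_sum -[X in _ <= X]mulr1 mulr_natl -sumr_const.
by apply: ler_sum => x _; rewrite Re_psi cos_le1.
Qed.

Lemma W_q (a : K) : complex.Re (W a) = #|K|%:R ->
  forall x, abs_trace p (x ^+ d + a * x) = 0.
Proof.
move=> h x.
have hs : \sum_(y : K) (1 - complex.Re (psi (y ^+ d + a * y))) = 0.
  by rewrite sumrB -Re_sum -/(W a) h sumr_const subrr.
have := psumr_eq0P _ hs (i := x) erefl.
have hge y : true -> 0 <= 1 - complex.Re (psi (y ^+ d + a * y)).
  by move=> _; rewrite subr_ge0 Re_psi cos_le1.
move/(_ hge)/eqP; rewrite subr_eq0 => /eqP /esym.
rewrite Re_psi; have [tp te] := trace_natP hp (x ^+ d + a * x).
by move/(cos_ang1 hp tp) => h0; rewrite -te h0.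
Qed.

End Weil.
Theorem corollary2p3 (R : realType) (K : finFieldType) (p : nat) (d : nat)
  (hp : p \in [pchar K])
  (hcop : coprime d (#|K| - 1))
  (hnd : ~ degenerate K p d) :
  exists a b : K, [/\ a != 0, b != 0,
    0 < weil_sum R p d a & weil_sum R p d b < 0].
Proof.
have q1 := q_gt1 K.
have d0 : (0 < d)%N.
  case: (posnP d) => // dz; exfalso; apply: hnd; exists 0%N.
  move: hcop; rewrite dz /coprime gcd0n => /eqP ->.
  by rewrite !modn1.
set w := fun a : K => complex.Re (weil_sum R p d a).
have hW a : weil_sum R p d a = (w a)%:C%C := W_C R hp hcop d0 a.
have s1 : \sum_(a : K) w a = #|K|%:R.
  apply: (@complexI R); rewrite rmorph_sum rmorph_nat -(sumW R hp d0).
  by apply: eq_bigr => a _; rewrite hW.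
have s2 : \sum_(a : K) w a ^+ 2 = #|K|%:R ^+ 2.
  apply: (@complexI R); rewrite rmorph_sum rmorphXn rmorph_nat -(sumW2 R hp hcop d0).
  by apply: eq_bigr => a _; rewrite hW rmorphXn.
have w0 : w 0 = 0 by rewrite /w (W0 R hp hcop d0).
have wle a : w a <= #|K|%:R := Re_le R p d a.
have qpos : (0 : R) < #|K|%:R by rewrite ltr0n; lia.
have [a a0 ha] : exists2 a : K, a != 0 & 0 < w a.
  case: (pickP (fun a => (a != 0) && (0 < w a))) => [a /andP[]|none]; first by exists a.
  exfalso.
  have : \sum_(a : K) w a <= 0.
    apply: sumr_le0 => a _; case: (eqVneq a 0) => [->|an0]; first by rewrite w0.
    by move: (none a); rewrite an0 /= leNgt => ->.
  by rewrite s1 leNgt qpos.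
have [b b0 hb] : exists2 b : K, b != 0 & w b < 0.
  case: (pickP (fun a => (a != 0) && (w a < 0))) => [b /andP[]|none]; first by exists b.
  exfalso; clear a a0 ha.
  have wge a : 0 <= w a.
    case: (eqVneq a 0) => [->|an0]; first by rewrite w0.
    by move: (none a); rewrite an0 /= leNgt => ->.
  have hs : \sum_(a : K) w a * (#|K|%:R - w a) = 0.
    rewrite (eq_bigr (fun a => #|K|%:R * w a - w a ^+ 2)); last by move=> a _; ring.
    by rewrite sumrB -mulr_sumr s1 s2 expr2 subrr.
  have hz a : w a * (#|K|%:R - w a) = 0.
    apply: (psumr_eq0P _ hs) => // c _.
    by rewrite mulr_ge0 // subr_ge0.
  case: (pickP (fun a => w a == #|K|%:R)) => [c /eqP hc | none2].
    have c0 : c != 0 by apply/eqP => c0; move: hc; rewrite c0 w0 => /eqP; rewrite eq_sym gt_eqF.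
    apply: hnd; apply: (trace_vanish_degenerate hp d0 c0).
    exact: (W_q hp hc).
  have : \sum_(a : K) w a = 0.
    apply: big1 => c _; move/eqP: (hz c); rewrite mulf_eq0 subr_eq0 [#|K|%:R == _]eq_sym.
    by rewrite none2 orbF => /eqP.
  by rewrite s1 => /eqP; rewrite gt_eqF.
exists a, b; split => //.
  by rewrite hW ltcE /= eqxx.
by rewrite hW ltcE /= eqxx.
Qed.
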